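(* For every sum-bucket game $\mathcal R$, every sequence of greedy moves starting from an arbitrary routing is finite and ends at a Nash-routing; in particular every sum-bucket game has a Nash-routing.
   Context: A routing game $(\mathbf N,G,\mathcal P)$: players $\{1,\dots,N\}$ ($N\ge1$), a finite graph $G$, and for each player $i$ a nonempty finite set $\mathcal P_i$ of paths (each with at least one edge) from $u_i$ to $v_i$; $\mathcal P=\bigcup_i\mathcal P_i$, $L=\max_{p\in\mathcal P}|p|$. A routing is $\mathbf p=[p_1,\dots,p_N]$ with $p_i\in\mathcal P_i$. Sum-bucket game: for $k=0,\dots,\lceil\lg L\rceil$ the bucket $B_k$ is the set of paths in $\mathcal P$ with length in $[2^k,2^{k+1})$, $B(q)$ is the bucket index of path $q$; normalized length $\overline D_q=2^{B(q)+1}-1$; $\overline C_{e,q}(\mathbf p)$ is the number of players $j$ with $e\in p_j$ and $B(p_j)=B(q)$; $\overline C_q(\mathbf p)=\max_{e\in q}\overline C_{e,q}(\mathbf p)$; player cost $pc_i(\mathbf p)=\overline C_{p_i}(\mathbf p)+\overline D_{p_i}$. A greedy move by player $i$ replaces $p_i$ by some $p_i'\in\mathcal P_i$ so that $pc_i$ strictly decreases, other paths unchanged. A Nash-routing is a routing from which no greedy move is possible. *)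

(* Defs.v *)
From mathcomp Require Import all_boot.
Set Implicit Arguments. Unset Strict Implicit. Unset Printing Implicit Defensive.

(* A finite graph: vertices V, edges E (both finite types) and a traversal
   relation [step e x y] : edge e may be traversed from x to y.
   (Undirected graphs: step e x y iff {x,y} are the ends of e; directed:
   only from tail to head.) *)
Section Routing.
Variables (V E : finType) (step : E -> V -> V -> bool).

Fixpoint is_walk (x : V) (p : seq E) (y : V) : bool :=
  match p with
  | [::] => x == y
  | e :: p' => [exists z : V, step e x z && is_walk z p' y]
  end.

Variable N : nat.
Variable Pset : 'I_N -> seq (seq E).

Definition routingT := {ffun 'I_N -> seq E}.
Definition is_routing (r : routingT) : Prop := forall i, r i \in Pset i.

(* bucket index: B(q) = floor(lg |q|), i.e. |q| in [2^B, 2^(B+1)) *)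
Definition bucket (q : seq E) : nat := trunc_log 2 (size q).
Definition Dbar (q : seq E) : nat := 2 ^ (bucket q).+1 - 1.
Definition Cbar_e (r : routingT) (e : E) (q : seq E) : nat :=
  #|[set j : 'I_N | (e \in r j) && (bucket (r j) == bucket q)]|.
Definition Cbar (r : routingT) (q : seq E) : nat :=
  \max_(e <- q) Cbar_e r e q.
Definition pc (r : routingT) (i : 'I_N) : nat := Cbar r (r i) + Dbar (r i).

Definition greedy_move (r r' : routingT) : Prop :=
  exists i : 'I_N,
    r' i \in Pset i /\ (forall j, j != i -> r' j = r j) /\ pc r' i < pc r i.

Definition nash_routing (r : routingT) : Prop :=
  is_routing r /\ ~ (exists r', greedy_move r r').

End Routing.

(* Main.v *)
Require Import Defs.
From Stdlib Require Import Classical.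
From mathcomp Require Import all_boot.

Set Implicit Arguments. Unset Strict Implicit.
Section Aux.
Variables (E : finType) (N : nat).

Lemma Cbar_e_le (r : routingT E N) e q : e \in q -> Cbar_e r e q <= Cbar r q.
Proof. by move=> eq; rewrite /Cbar; apply: (leq_bigmax_seq e). Qed.

Lemma Dbar_bucket (q q' : seq E) : bucket q = bucket q' -> Dbar q = Dbar q'.
Proof. by rewrite /Dbar => ->. Qed.

Lemma pc_other (r r' : routingT E N) i j :
  (forall k, k != i -> r' k = r k) -> j != i ->
  pc r' j <= maxn (pc r j) (pc r' i).
Proof.
move=> Hk ji; rewrite /pc (Hk j ji).
set q := r j.
have HD : Dbar q <= maxn (Cbar r q + Dbar q) (Cbar r' (r' i) + Dbar (r' i)).
  by rewrite leq_max leq_addl.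
set M := maxn _ _ in HD *.
suff H : Cbar r' q <= M - Dbar q by rewrite -(subnK HD) leq_add2r.
apply/bigmax_leqP_seq => e eq _.
rewrite leq_subRL // addnC.
case Hb: ((e \in r' i) && (bucket (r' i) == bucket q)).
- move/andP: Hb => [ei /eqP bq].
  rewrite /M leq_max; apply/orP; right.
  rewrite -(Dbar_bucket bq) leq_add2r.
  have -> : Cbar_e r' e q = Cbar_e r' e (r' i) by rewrite /Cbar_e bq.
  exact: Cbar_e_le.
- rewrite /M leq_max; apply/orP; left; rewrite leq_add2r.
  apply: leq_trans (Cbar_e_le r eq).
  apply: subset_leq_card; apply/subsetP => k; rewrite !inE.
  case: (eqVneq k i) => [->|ki]; first by rewrite Hb.
  by rewrite (Hk k ki).
Qed.

Lemma aux_arith S X n : 0 < n -> X + (S + n.-1 * X) <= n * X + S.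
Proof. by move=> n0; rewrite addnCA -{1}(mul1n X) -mulnDl add1n prednK // addnC. Qed.

Definition Phi (r : routingT E N) : nat := \sum_(j < N) (N.+1) ^ (pc r j).

Lemma Phi_dec (Pset : 'I_N -> seq (seq E)) r r' :
  greedy_move Pset r r' -> Phi r' < Phi r.
Proof.
move=> [i [_ [Hk Hlt]]].
rewrite /Phi (bigD1 i) //= [X in _ < X](bigD1 i) //=.
apply: (@leq_trans (N * N.+1 ^ pc r' i + \sum_(j < N | j != i) N.+1 ^ pc r j).+1).
  have Hs : \sum_(j < N | j != i) N.+1 ^ pc r' j <=
            \sum_(j < N | j != i) (N.+1 ^ pc r j + N.+1 ^ pc r' i).
    apply: leq_sum => j ji.
    apply: leq_trans (leq_pexp2l _ (pc_other Hk ji)) _ => //.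
    rewrite /maxn; case: ifP => _; by rewrite ?leq_addl ?leq_addr.
  rewrite big_split /= in Hs.
  rewrite ltnS.
  have Hc : \sum_(j < N | j != i) N.+1 ^ pc r' i <= N.-1 * N.+1 ^ pc r' i.
    rewrite sum_nat_const leq_mul2r; apply/orP; right.
    have := cardC1 i; rewrite card_ord => <-.
    by apply: subset_leq_card; apply/subsetP => k; rewrite !inE.
  have N0 : 0 < N by apply: leq_ltn_trans (ltn_ord i).
  set X := N.+1 ^ pc r' i in Hc *.
  apply: (@leq_trans (X + (\sum_(j < N | j != i) N.+1 ^ pc r j + N.-1 * X))).
    rewrite leq_add2l; apply: leq_trans Hs _; by rewrite leq_add2l.
  exact: aux_arith.
rewrite -addSn; apply: leq_add => //.
apply: leq_trans (_ : N.+1 ^ (pc r' i).+1 <= _).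
  by rewrite expnS ltn_pmul2r ?expn_gt0.
rewrite leq_exp2l // ltnS; exact: leq_ltn_trans (ltn_ord i).
Qed.

End Aux.

Theorem mainTheorem10
  (V E : finType) (step : E -> V -> V -> bool)
  (N : nat) (u v : 'I_N -> V) (Pset : 'I_N -> seq (seq E))
  (HN : 1 <= N)
  (Hne : forall i, Pset i != [::])
  (Hpath : forall i q, q \in Pset i -> (0 < size q) && is_walk step (u i) q (v i)) :
  (* every greedy-move sequence from a routing is finite *)
  (forall f : nat -> routingT E N,
      is_routing Pset (f 0) ->
      ~ (forall n, greedy_move Pset (f n) (f n.+1))) /\
  (* a greedy sequence that cannot be extended ends at a Nash-routing *)
  (forall r : routingT E N,
      is_routing Pset r -> ~ (exists r', greedy_move Pset r r') ->
      nash_routing Pset r) /\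
  (* every sum-bucket game has a Nash-routing *)
  (exists r : routingT E N, nash_routing Pset r).
Proof.
split; [|split].
- move=> f _ Hg.
  have H : forall n, Phi (f n) + n <= Phi (f 0).
    elim=> [|n IH]; first by rewrite addn0.
    apply: leq_trans IH; rewrite addnS -addSn leq_add2r.
    exact: Phi_dec (Hg n).
  by have := H (Phi (f 0)).+1; rewrite addnS ltnNge leq_addl.
- by move=> r Hr Hn; split.
- pose r0 : routingT E N := [ffun i => head [::] (Pset i)].
  have Hr0 : is_routing Pset r0.
    move=> i; rewrite /r0 ffunE; move: (Hne i); case: (Pset i) => //= a l _.
    by rewrite inE eqxx.
  suff: forall n r, Phi r <= n -> is_routing Pset r ->
      exists r : routingT E N, nash_routing Pset r by move/(_ _ r0 (leqnn _) Hr0).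
  elim=> [|n IH] r Hle Hr.
  + exists r; split => // [[r' Hg]].
    by have := Phi_dec Hg; rewrite ltnNge (leq_trans Hle (leq0n _)).
  + case: (classic (exists r', greedy_move Pset r r')) => [[r' Hg]|Hn].
    * apply: (IH r').
        by rewrite -ltnS; apply: leq_trans (Phi_dec Hg) Hle.
      move: Hg => [i [Hi [Hk _]]] j.
      by case: (eqVneq j i) => [->|ji] //; rewrite (Hk j ji).
    * by exists r; split.
Qed.
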